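(* Let $D$ be a square-free integer and let $\mathbb{Z}[\sqrt{D}]$ denote the ring of integers of $\mathbb{Q}(\sqrt{D})$. Let $A\in\mathbb{M}_2(\mathbb{Z}[\sqrt{D}])$ be a singular matrix. If $A$ is similar (via an invertible matrix in $\mathbb{M}_2(\mathbb{Z}[\sqrt{D}])$) to a matrix having at least one row or column whose entries generate a principal ideal of $\mathbb{Z}[\sqrt{D}]$, then $A$ is a column--row matrix.
   Context: A matrix $M\in\mathbb{M}_2(R)$ is called column--row if there exist $a,b,c,d\in R$ such that $M=\begin{pmatrix} a&0\\ b&0\end{pmatrix}\begin{pmatrix} c&d\\ 0&0\end{pmatrix}$. $\mathbb{Z}[\sqrt{D}]=\{a+b\sqrt{D}:a,b\in\mathbb{Z}\}$ if $D\equiv 2,3 \pmod 4$ and $\{\frac{a+b\sqrt{D}}{2}:a\equiv b \pmod 2\}$ if $D\equiv 1\pmod 4$. *)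

(* Defs.v *)
From mathcomp Require Import all_boot all_order all_algebra algC.
Set Implicit Arguments. Unset Strict Implicit. Unset Printing Implicit Defensive.
Import Order.TTheory GRing.Theory Num.Theory.
Local Open Scope ring_scope.

Definition squarefree (D : int) : Prop :=
  D != 0 /\ forall p : nat, prime p -> ~~ ((p * p)%N %| `|D|%N)%N.

Definition sqrtD (D : int) : algC := sqrtC (D%:~R).

(* Membership in Z[sqrt D] (the ring of integers of Q(sqrt D)), as in the paper:
   {a + b sqrt D : a, b in Z}                      if D = 2,3 mod 4,
   {(a + b sqrt D)/2 : a, b in Z, a = b mod 2}      if D = 1 mod 4. *)
Definition inO (D : int) (x : algC) : Prop :=
  if (D %% 4)%Z == 1 then
    exists a b : int, (a %% 2)%Z = (b %% 2)%Z /\ x = (a%:~R + b%:~R * sqrtD D) / 2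
  else exists a b : int, x = a%:~R + b%:~R * sqrtD D.

Definition mxO (D : int) (A : 'M[algC]_2) : Prop := forall i j, inO D (A i j).

Definition principal2 (D : int) (u v : algC) : Prop :=
  exists g, inO D g /\
    (exists r s, inO D r /\ inO D s /\ g = r * u + s * v) /\
    (exists k l, inO D k /\ inO D l /\ u = k * g /\ v = l * g).

Definition has_principal_line (D : int) (B : 'M[algC]_2) : Prop :=
  (exists i : 'I_2, principal2 D (B i 0) (B i 1)) \/
  (exists j : 'I_2, principal2 D (B 0 j) (B 1 j)).

Definition similarO (D : int) (A B : 'M[algC]_2) : Prop :=
  exists P Q : 'M[algC]_2, mxO D P /\ mxO D Q /\ P *m Q = 1%:M /\ Q *m P = 1%:M /\
    A = P *m B *m Q.

Definition column_row (D : int) (M : 'M[algC]_2) : Prop :=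
  exists a b c d, inO D a /\ inO D b /\ inO D c /\ inO D d /\
    M = (\matrix_(i < 2, j < 2) (if j == 0 then (if i == 0 then a else b) else 0)) *m
        (\matrix_(i < 2, j < 2) (if i == 0 then (if j == 0 then c else d) else 0)).

(* Main.v *)
Require Import Defs.
From mathcomp Require Import all_boot all_order all_algebra algC.
From mathcomp Require Import ring.
Import Order.TTheory GRing.Theory Num.Theory.
Local Open Scope ring_scope.

Lemma det2 (R : comRingType) (A : 'M[R]_2) : \det A = A 0 0 * A 1 1 - A 0 1 * A 1 0.
Proof.
rewrite (expand_det_row _ 0) !big_ord_recl big_ord0 /cofactor !det_mx11 !mxE /=.
rewrite (_ : lift (lift ord0 ord0) 0 = 0 :> 'I_2); last by apply/val_inj.
rewrite (_ : lift ord0 ord0 = 1 :> 'I_2); last by apply/val_inj.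
rewrite expr0 expr1 /=; ring.
Qed.

Definition wD (D : int) : algC :=
  if (D %% 4)%Z == 1 then (1 + sqrtD D) / 2 else sqrtD D.

Lemma wD_sq D : exists e f : int, wD D ^+ 2 = e%:~R + f%:~R * wD D.
Proof.
have hs : sqrtD D ^+ 2 = D%:~R by rewrite /sqrtD sqrtCK.
rewrite /wD; case: ifP => [/eqP h4|_].
- exists (D %/ 4)%Z, 1.
  have hD := divz_eq D 4; rewrite h4 in hD.
  have h2 : (2 : algC) != 0 by rewrite pnatr_eq0.
  have -> : ((1 + sqrtD D) / 2) ^+ 2 = (1 + 2 * sqrtD D + sqrtD D ^+ 2) / 4.
    by field.
  rewrite hs {2}hD rmorphD rmorphM /= rmorph1.
  have h4' : (4 : algC) != 0 by rewrite pnatr_eq0.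
  rewrite (_ : (4%:~R : algC) = 4) //; field; by [].
- by exists D, 0; rewrite hs rmorph0 mul0r addr0.
Qed.

Lemma inO_char D x : inO D x <-> exists a b : int, x = a%:~R + b%:~R * wD D.
Proof.
have h2 : (2 : algC) != 0 by rewrite pnatr_eq0.
rewrite /inO /wD; case: eqP => _; last by split.
split.
- move=> [a [b [hab ->]]].
  exists ((a %/ 2)%Z - (b %/ 2)%Z), b.
  have ha := divz_eq a 2; have hb := divz_eq b 2.
  have : (a%:~R : algC) = ((a %/ 2)%Z)%:~R * 2 + ((a %% 2)%Z)%:~R.
    by rewrite {1}ha rmorphD rmorphM.
  have : (b%:~R : algC) = ((b %/ 2)%Z)%:~R * 2 + ((b %% 2)%Z)%:~R.
    by rewrite {1}hb rmorphD rmorphM.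
  rewrite hab => -> ->; rewrite rmorphB /=; by field.
- move=> [a [b ->]].
  exists (a * 2 + b)%Z, b; split; first by rewrite modzMDl.
  rewrite rmorphD rmorphM /=; by field.
Qed.

Lemma inOD D x y : inO D x -> inO D y -> inO D (x + y).
Proof.
move=> /inO_char [a [b ->]] /inO_char [c [d ->]]; apply/inO_char.
exists (a + c), (b + d); rewrite !rmorphD /=; ring.
Qed.

Lemma inOM D x y : inO D x -> inO D y -> inO D (x * y).
Proof.
move=> /inO_char [a [b ->]] /inO_char [c [d ->]]; apply/inO_char.
have [e [f hw]] := wD_sq D.
exists (a * c + b * d * e), (a * d + b * c + b * d * f).
have -> : (a%:~R + b%:~R * wD D) * (c%:~R + d%:~R * wD D) =
  a%:~R * c%:~R + (a%:~R * d%:~R + b%:~R * c%:~R) * wD D + b%:~R * d%:~R * wD D ^+ 2 :> algC.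
  by ring.
rewrite hw !rmorphD !rmorphM /=; ring.
Qed.

Lemma inO0 D : inO D 0.
Proof. by apply/inO_char; exists 0, 0; rewrite mul0r addr0. Qed.

Lemma inO1 D : inO D 1.
Proof. by apply/inO_char; exists 1, 0; rewrite mul0r addr0. Qed.

Definition R1 D (M : 'M[algC]_2) : Prop :=
  exists x y : 'I_2 -> algC, (forall i, inO D (x i)) /\ (forall j, inO D (y j)) /\
    forall i j, M i j = x i * y j.

Lemma ord2P (i : 'I_2) : i = 0 \/ i = 1.
Proof. by case: i => [[|[|//]]] Hi; [left|right]; apply/val_inj. Qed.

Lemma R1_column_row D M : R1 D M -> column_row D M.
Proof.
move=> [x [y [hx [hy hM]]]].
exists (x 0), (x 1), (y 0), (y 1); do 4 (split; first by []).
apply/matrixP => i j; rewrite !mxE !big_ord_recl big_ord0 !mxE /= hM.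
have e : (lift ord0 ord0 : 'I_2) = 1 by apply/val_inj.
rewrite !mulr0 !addr0.
by case: (ord2P i) => ->; case: (ord2P j) => ->.
Qed.

Lemma R1_sim D P B Q : mxO D P -> mxO D Q -> R1 D B -> R1 D (P *m B *m Q).
Proof.
move=> hP hQ [x [y [hx [hy hB]]]].
exists (fun i => P i 0 * x 0 + P i 1 * x 1), (fun j => y 0 * Q 0 j + y 1 * Q 1 j).
split; first by move=> i; apply: inOD; apply: inOM.
split; first by move=> j; apply: inOD; apply: inOM.
move=> i j; rewrite !mxE !big_ord_recl big_ord0 !mxE !big_ord_recl !big_ord0.
have e : (lift ord0 ord0 : 'I_2) = 1 by apply/val_inj.
rewrite e !hB; ring.
Qed.

Lemma core D u v u' v' : inO D u -> inO D v -> inO D u' -> inO D v' ->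
  u * v' = v * u' -> principal2 D u v ->
  exists g m k l, [/\ inO D g, inO D m, inO D k & inO D l] /\
    [/\ u = g * k, v = g * l, u' = m * k & v' = m * l].
Proof.
move=> hu hv hu' hv' hdet [g [hg [[r [s [hr [hs hgrs]]]] [k [l [hk [hl [hku hlv]]]]]]]].
have [g0|gn0] := eqVneq g 0.
  exists 0, 1, u', v'; split; first by split => //; [apply: inO0 | apply: inO1].
  by split; rewrite ?mul0r ?mul1r // ?hku ?hlv g0 mulr0.
exists g, (r * u' + s * v'), k, l.
split; first by split => //; apply: inOD; apply: inOM.
have h1 : r * k + s * l = 1.
  apply: (mulfI gn0); rewrite mulr1 {2}hgrs hku hlv; ring.
have h2 : k * v' = l * u'.
  apply: (mulfI gn0); move: hdet; rewrite hku hlv => hdet.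
  by rewrite mulrA [g * k]mulrC hdet; ring.
split; first (by rewrite hku mulrC); first by rewrite hlv mulrC.
- transitivity (u' * (r * k + s * l)); first by rewrite h1 mulr1.
  have : u' * (r * k + s * l) = r * u' * k + s * (l * u') by ring.
  by rewrite -h2 => ->; ring.
- transitivity (v' * (r * k + s * l)); first by rewrite h1 mulr1.
  have : v' * (r * k + s * l) = r * (k * v') + s * v' * l by ring.
  by rewrite h2 => ->; ring.
Qed.

Lemma R1_principal D B : mxO D B -> \det B = 0 -> has_principal_line D B -> R1 D B.
Proof.
move=> hB; rewrite det2 => /eqP; rewrite subr_eq0 => /eqP hdet.
case=> [[i hi]|[j hj]].
- case: (ord2P i) => ei; rewrite ei in hi.
  + have [g [m [k [l [[hg hm hk hl] [e1 e2 e3 e4]]]]]] :=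
      @core D (B 0 0) (B 0 1) (B 1 0) (B 1 1) (hB _ _) (hB _ _) (hB 1 0) (hB 1 1) hdet hi.
    exists (fun t => if t == 0 then g else m), (fun t => if t == 0 then k else l).
    split; first by move=> t; case: ifP.
    split; first by move=> t; case: ifP.
    by move=> a b; case: (ord2P a) => ->; case: (ord2P b) => ->.
  + have [g [m [k [l [[hg hm hk hl] [e1 e2 e3 e4]]]]]] :=
      @core D (B 1 0) (B 1 1) (B 0 0) (B 0 1) (hB _ _) (hB _ _) (hB 0 0) (hB 0 1) (ltac:(by rewrite [LHS]mulrC -hdet mulrC)) hi.
    exists (fun t => if t == 0 then m else g), (fun t => if t == 0 then k else l).
    split; first by move=> t; case: ifP.
    split; first by move=> t; case: ifP.
    by move=> a b; case: (ord2P a) => ->; case: (ord2P b) => ->.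
- case: (ord2P j) => ej; rewrite ej in hj.
  + have [g [m [k [l [[hg hm hk hl] [e1 e2 e3 e4]]]]]] :=
      @core D (B 0 0) (B 1 0) (B 0 1) (B 1 1) (hB _ _) (hB _ _) (hB 0 1) (hB 1 1) (ltac:(by rewrite hdet mulrC)) hj.
    exists (fun t => if t == 0 then k else l), (fun t => if t == 0 then g else m).
    split; first by move=> t; case: ifP.
    split; first by move=> t; case: ifP.
    by move=> a b; case: (ord2P a) => ->; case: (ord2P b) => ->; rewrite /= mulrC.
  + have [g [m [k [l [[hg hm hk hl] [e1 e2 e3 e4]]]]]] :=
      @core D (B 0 1) (B 1 1) (B 0 0) (B 1 0) (hB _ _) (hB _ _) (hB 0 0) (hB 1 0) (ltac:(by rewrite -hdet mulrC)) hj.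
    exists (fun t => if t == 0 then k else l), (fun t => if t == 0 then m else g).
    split; first by move=> t; case: ifP.
    split; first by move=> t; case: ifP.
    by move=> a b; case: (ord2P a) => ->; case: (ord2P b) => ->; rewrite /= mulrC.
Qed.

Theorem proposition2p5 (D : int) (A : 'M[algC]_2) :
  squarefree D -> mxO D A -> \det A = 0 ->
  (exists B : 'M[algC]_2, mxO D B /\ similarO D A B /\ has_principal_line D B) ->
  column_row D A.
Proof.
move=> _ _ hdA [B [hB [[P [Q [hP [hQ [hPQ [hQP hA]]]]]] hl]]].
apply: R1_column_row; rewrite hA; apply: R1_sim => //.
apply: R1_principal => //.
have : \det (Q *m A *m P) = 0 by rewrite !det_mulmx hdA mulr0 mul0r.
by rewrite hA !mulmxA hQP mul1mx -mulmxA hQP mulmx1.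
Qed.
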